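(* Let $\mu$ be a positive finite Borel measure supported in $[0,1]$. Let $\mathcal{D}\subset\ell^2(\mathbb{Z})$ be the subspace of finitely supported sequences, and define $F:\mathcal{D}\to L^2(\mu)$ by $F((c_k)_{k\in\mathbb{Z}})(x)=\sum_k c_k e_k(x)$, where $e_k(x)=e^{i2\pi kx}$. If $$\sum_{k\in\mathbb{Z}}\Big|\int e_k(x)\,d\mu(x)\Big|^2<\infty,$$ then the operator $F$ (as a densely defined operator from $\ell^2(\mathbb{Z})$ into $L^2(\mu)$) is closable.
   Context: An operator is closable if the closure of its graph is the graph of a linear operator. *)

(* Defs.v *)
From HB Require Import structures.
From mathcomp Require Import all_boot all_order all_algebra.
From mathcomp Require Import all_classical all_reals all_analysis.
From mathcomp.real_closed Require Import complex.

Set Implicit Arguments.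
Unset Strict Implicit.
Unset Printing Implicit Defensive.

Import Order.TTheory GRing.Theory Num.Theory.
Import numFieldNormedType.Exports.

Local Open Scope classical_set_scope.
Local Open Scope ring_scope.

Section L2closable.
Variable R : realType.

Definition cabs2 (z : R[i]) : R := complex.Re z ^+ 2 + complex.Im z ^+ 2.

Definition ek (k : int) (x : R) : R[i] :=
  Complex (cos (2 * pi * k%:~R * x)) (sin (2 * pi * k%:~R * x)).

Definition cintegral (mu : {measure set R -> \bar R}) (f : R -> R[i]) : R[i] :=
  Complex (\int[mu]_x (complex.Re (f x)))%R (\int[mu]_x (complex.Im (f x)))%R.

Definition in_l2 (c : int -> R[i]) : Prop :=
  (\esum_(k in [set: int]) (cabs2 (c k))%:E < +oo)%E.

Definition l2dist2 (c d : int -> R[i]) : \bar R :=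
  \esum_(k in [set: int]) (cabs2 (c k - d k))%:E.

Definition finsupp (c : int -> R[i]) : Prop := finite_set [set k | c k != 0].

Definition in_L2 (mu : {measure set R -> \bar R}) (g : R -> R[i]) : Prop :=
  [/\ measurable_fun setT (fun x => complex.Re (g x)),
      measurable_fun setT (fun x => complex.Im (g x)) &
      (\int[mu]_x (cabs2 (g x))%:E < +oo)%E].

Definition L2dist2 (mu : {measure set R -> \bar R}) (f g : R -> R[i]) : \bar R :=
  \int[mu]_x (cabs2 (f x - g x))%:E.

(* the operator F on D: F c (x) = sum_k c_k e_k(x) (finite sum over the support) *)
Definition Fop (c : int -> R[i]) (x : R) : R[i] :=
  \sum_(k \in [set: int]) (c k * ek k x).

(* closure in l^2(Z) x L^2(mu) of the graph {(c, F c) | c in D}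
   (sequential closure; both spaces are (pseudo)metric) *)
Definition graph_closure (mu : {measure set R -> \bar R}) :
    set ((int -> R[i]) * (R -> R[i])) :=
  [set cg | [/\ in_l2 cg.1, in_L2 mu cg.2 &
    exists u : nat -> int -> R[i],
      [/\ forall n, finsupp (u n),
          l2dist2 (u n) cg.1 @[n --> \oo] --> 0%E &
          L2dist2 mu (Fop (u n)) cg.2 @[n --> \oo] --> 0%E]]].

(* S (a subset of l^2(Z) x L^2(mu)) is the graph of a linear operator
   T : Dom T (subset of l^2(Z)) -> L^2(mu); elements of L^2(mu) are
   identified up to mu-a.e. equality. *)
Definition graph_of_linear_operator (mu : {measure set R -> \bar R})
    (S : set ((int -> R[i]) * (R -> R[i]))) : Prop :=
  exists (Dom : set (int -> R[i])) (T : (int -> R[i]) -> R -> R[i]),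
    [/\ Dom (fun _ => 0),
        forall (a : R[i]) c d, Dom c -> Dom d -> Dom (fun k => a * c k + d k),
        forall c, Dom c -> in_l2 c /\ in_L2 mu (T c),
        forall (a : R[i]) c d, Dom c -> Dom d ->
          {ae mu, forall x, T (fun k => a * c k + d k) x = a * T c x + T d x} &
        forall c g, in_L2 mu g ->
          (S (c, g) <-> Dom c /\ {ae mu, forall x, g x = T c x})].

Definition closable (mu : {measure set R -> \bar R}) : Prop :=
  graph_of_linear_operator mu (graph_closure mu).

End L2closable.

(* Main.v *)
Require Import Defs.
From HB Require Import structures.
From mathcomp Require Import all_boot all_order all_algebra.
From mathcomp Require Import all_classical all_reals all_analysis.
From mathcomp.real_closed Require Import complex.
From mathcomp Require Import ring lra measurable_realfun.

Import Order.TTheory GRing.Theory Num.Theory.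

Local Open Scope classical_set_scope.
Local Open Scope ring_scope.
Set Implicit Arguments.
Unset Strict Implicit.

Section Pointwise.
Variable R : realType.
Implicit Types (z w a b : R[i]) (x y t : R).

Lemma ReM a b : complex.Re (a * b) = complex.Re a * complex.Re b - complex.Im a * complex.Im b.
Proof. by case: a => ? ?; case: b. Qed.
Lemma ImM a b : complex.Im (a * b) = complex.Re a * complex.Im b + complex.Im a * complex.Re b.
Proof. by case: a => ? ?; case: b. Qed.
Lemma ReD a b : complex.Re (a + b) = complex.Re a + complex.Re b.
Proof. by case: a => ? ?; case: b. Qed.
Lemma ImD a b : complex.Im (a + b) = complex.Im a + complex.Im b.
Proof. by case: a => ? ?; case: b. Qed.
Lemma ReN a : complex.Re (- a) = - complex.Re a.
Proof. by case: a. Qed.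
Lemma ImN a : complex.Im (- a) = - complex.Im a.
Proof. by case: a. Qed.
Lemma ReB a b : complex.Re (a - b) = complex.Re a - complex.Re b.
Proof. by rewrite ReD ReN. Qed.
Lemma ImB a b : complex.Im (a - b) = complex.Im a - complex.Im b.
Proof. by rewrite ImD ImN. Qed.
Lemma Re0 : complex.Re (0 : R[i]) = 0. Proof. by []. Qed.
Lemma Im0 : complex.Im (0 : R[i]) = 0. Proof. by []. Qed.

Lemma cabs2_ge0 z : 0 <= cabs2 z.
Proof. by rewrite /cabs2 addr_ge0 // sqr_ge0. Qed.

Lemma cabs2M a z : cabs2 (a * z) = cabs2 a * cabs2 z.
Proof. rewrite /cabs2 ReM ImM; ring. Qed.

Lemma cabs2N z : cabs2 (- z) = cabs2 z.
Proof. by rewrite /cabs2 ReN ImN !sqrrN. Qed.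

Lemma cabs2D_le z w : cabs2 (z + w) <= 2 * cabs2 z + 2 * cabs2 w.
Proof.
rewrite /cabs2 ReD ImD.
have h1 := sqr_ge0 (complex.Re z - complex.Re w).
have h2 := sqr_ge0 (complex.Im z - complex.Im w).
rewrite -subr_ge0; set p := _ - _.
have -> : p = (complex.Re z - complex.Re w) ^+ 2 + (complex.Im z - complex.Im w) ^+ 2.
  rewrite /p; ring.
by rewrite addr_ge0.
Qed.

Lemma cabs2B_le z w : cabs2 (z - w) <= 2 * cabs2 z + 2 * cabs2 w.
Proof. by rewrite -(cabs2N w) cabs2D_le. Qed.

Lemma cabs2_eq0 z : cabs2 z = 0 -> z = 0.
Proof.
case: z => a b; rewrite /cabs2 /= => /eqP; rewrite paddr_eq0 ?sqr_ge0 //.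
by rewrite !sqrf_eq0 => /andP[/eqP -> /eqP ->].
Qed.

Lemma amgm x y t : 0 < t -> 2 * `|x * y| <= t * x ^+ 2 + y ^+ 2 / t.
Proof.
move=> t0; set u := y / t.
have yE : y = t * u by rewrite /u mulrC divfK // gt_eqF.
have -> : y ^+ 2 / t = t * u ^+ 2 by rewrite yE; field; rewrite gt_eqF.
rewrite yE normrM (normrM t) (gtr0_norm t0).
have hx : `|x| ^+ 2 = x ^+ 2 by rewrite real_normK ?num_real.
have hu : `|u| ^+ 2 = u ^+ 2 by rewrite real_normK ?num_real.
have := sqr_ge0 (`|x| - `|u|).
have := normr_ge0 x; have := normr_ge0 u.
nra.
Qed.

End Pointwise.
Section Sums.
Variable R : realType.
Local Open Scope ereal_scope.

Lemma esumZ_le (I : choiceType) (A : set I) (r : R) (b : I -> \bar R) :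
  (0 <= r)%R -> (forall i, 0 <= b i) ->
  \esum_(i in A) (r%:E * b i) <= r%:E * \esum_(i in A) b i.
Proof.
move=> r0 b0; apply: ge_ereal_sup => _ [X [finX XA] <-].
rewrite -ge0_mule_fsumr //; apply: lee_wpmul2l; first by rewrite lee_fin.
by apply: ereal_sup_ubound; exists X.
Qed.

Lemma sum_le_esum (I : choiceType) (r : seq I) (f : I -> R) :
  uniq r -> (forall i, (0 <= f i)%R) ->
  (\sum_(i <- r) f i)%:E <= \esum_(i in [set: I]) (f i)%:E.
Proof.
move=> ur f0; apply: esum_ge; exists [set` r].
  by split => //; exact: finite_seq.
by rewrite -sumEFin fsbig_seq.
Qed.

Lemma cvg0P (x : nat -> \bar R) : (forall n, 0 <= x n) ->
  (x n @[n --> \oo] --> 0) <->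
  (forall e : R, (0 < e)%R -> \forall n \near \oo, x n <= e%:E).
Proof.
move=> x0; split.
  move=> /fine_cvgP [xfin xc] e e0.
  move/cvgrPdist_lt: xc => /(_ e e0) xc.
  near=> n.
  have xn : x n \is a fin_num by near: n.
  have hn : (`|0 - (fine \o x) n| < e)%R by near: n.
  rewrite sub0r normrN /= in hn.
  by rewrite -(fineK xn) lee_fin ltW // (le_lt_trans (ler_norm _) hn).
move=> H; apply/fine_cvgP; split.
  near=> n.
  have xn : x n <= 1%:E by near: n; exact: H.
  by rewrite ge0_fin_numE ?(le_lt_trans xn) ?ltry.
apply/cvgrPdist_lt => e e0.
near=> n.
have xn : x n <= (e / 2)%:E by near: n; apply: H; rewrite divr_gt0.
rewrite sub0r normrN /= ger0_norm ?fine_ge0 //.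
have xfin : x n \is a fin_num by rewrite ge0_fin_numE ?(le_lt_trans xn) ?ltry.
rewrite -lte_fin fineK // (le_lt_trans xn) // lte_fin; lra.
Unshelve. all: end_near.
Qed.

Lemma small_le0 (x C : R) : (0 <= C)%R ->
  (forall t e : R, (0 < t)%R -> (0 < e)%R -> (x <= C / t + t * e)%R) -> (x <= 0)%R.
Proof.
move=> C0 H; rewrite leNgt; apply/negP => x0.
pose t := (4 * (C + 1) / x)%R.
have t0 : (0 < t)%R by rewrite /t divr_gt0 // mulr_gt0 //; lra.
have := H t (x / (4 * t))%R t0 (divr_gt0 x0 (mulr_gt0 (ltr0n _ 4) t0)).
have -> : (t * (x / (4 * t)) = x / 4)%R by field; rewrite gt_eqF.
have -> : (C / t = C * x / (4 * (C + 1)))%R by rewrite /t; field; apply/andP; split; rewrite gt_eqF //; lra.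
have : (C * x / (4 * (C + 1)) <= x / 4)%R.
  rewrite ler_pdivrMr; last lra.
  have -> : (x / 4 * (4 * (C + 1)) = x * (C + 1))%R by field.
  nra.
lra.
Qed.

End Sums.
Notation mfD := measurable_funD.
Notation mfB := measurable_funB.
Notation mfM := measurable_funM.
Notation mEFin := measurable_EFinP.

Section Meas.
Variable R : realType.
Local Notation Re := complex.Re.
Local Notation Im := complex.Im.
Implicit Types (f g : R -> R[i]).

Definition meas f := measurable_fun setT (fun x => Re (f x)) /\
                     measurable_fun setT (fun x => Im (f x)).

Lemma Re_sum (I : Type) (r : seq I) (F : I -> R[i]) :
  Re (\sum_(j <- r) F j) = \sum_(j <- r) Re (F j).
Proof. by elim: r => [|a r IH]; rewrite ?big_nil ?big_cons // ReD IH. Qed.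
Lemma Im_sum (I : Type) (r : seq I) (F : I -> R[i]) :
  Im (\sum_(j <- r) F j) = \sum_(j <- r) Im (F j).
Proof. by elim: r => [|a r IH]; rewrite ?big_nil ?big_cons // ImD IH. Qed.

Lemma meas_cabs2 f : meas f -> measurable_fun setT (fun x => cabs2 (f x)).
Proof.
case=> m1 m2; rewrite /cabs2.
have -> : (fun x => Re (f x) ^+ 2 + Im (f x) ^+ 2) =
  ((fun x => Re (f x)) \* (fun x => Re (f x))) \+
  ((fun x => Im (f x)) \* (fun x => Im (f x))).
  by apply/funext => x /=; rewrite !expr2.
by apply: mfD; apply: mfM.
Qed.

Lemma meas_cabs2E f : meas f -> measurable_fun setT (fun x => (cabs2 (f x))%:E).
Proof. by move=> mf; apply/measurable_EFinP; exact: meas_cabs2. Qed.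

Lemma meas_lin (c : R) : measurable_fun setT (fun x : R => c * x).
Proof.
have -> : (fun x : R => c * x) = (cst c) \* id by [].
by apply: mfM => //; exact: measurable_id.
Qed.

Lemma meas_cos (c : R) : measurable_fun setT (fun x : R => cos (c * x)).
Proof.
apply: (measurableT_comp (f := cos)); last exact: meas_lin.
apply: continuous_measurable_fun; exact: continuous_cos.
Qed.
Lemma meas_sin (c : R) : measurable_fun setT (fun x : R => sin (c * x)).
Proof.
apply: (measurableT_comp (f := sin)); last exact: meas_lin.
apply: continuous_measurable_fun; exact: continuous_sin.
Qed.

Lemma meas_ek k : meas (ek k).
Proof. by split; rewrite /ek /=; [exact: meas_cos|exact: meas_sin]. Qed.

Lemma meas0 : meas (fun _ => 0).
Proof. by split => /=; exact: measurable_cst. Qed.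

Lemma measD f g : meas f -> meas g -> meas (fun x => f x + g x).
Proof.
move=> [f1 f2] [g1 g2]; split.
  have -> : (fun x => Re (f x + g x)) = (fun x => Re (f x)) \+ (fun x => Re (g x)).
    by apply/funext => x; rewrite ReD.
  exact: mfD.
have -> : (fun x => Im (f x + g x)) = (fun x => Im (f x)) \+ (fun x => Im (g x)).
  by apply/funext => x; rewrite ImD.
exact: mfD.
Qed.

Lemma measZ (s : R[i]) f : meas f -> meas (fun x => s * f x).
Proof.
move=> [f1 f2]; split.
  have -> : (fun x => Re (s * f x)) =
    (cst (Re s) \* (fun x => Re (f x))) \- (cst (Im s) \* (fun x => Im (f x))).
    by apply/funext => x; rewrite ReM.
  by apply: mfB; apply: mfM => //; exact: measurable_cst.
have -> : (fun x => Im (s * f x)) =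
  (cst (Re s) \* (fun x => Im (f x))) \+ (cst (Im s) \* (fun x => Re (f x))).
  by apply/funext => x; rewrite ImM.
by apply: mfD; apply: mfM => //; exact: measurable_cst.
Qed.

Lemma measB f g : meas f -> meas g -> meas (fun x => f x - g x).
Proof.
move=> mf mg; have := measD mf (measZ (-1) mg).
by congr meas; apply/funext => x; rewrite mulN1r.
Qed.

Lemma meas_sum (I : Type) (r : seq I) (F : I -> R -> R[i]) :
  (forall j, meas (F j)) -> meas (fun x => \sum_(j <- r) F j x).
Proof.
move=> mF; elim: r => [|a r IH].
  by under eq_fun do rewrite big_nil; exact: meas0.
under eq_fun do rewrite big_cons; exact: measD.
Qed.

End Meas.
Section Int.
Variable R : realType.
Variable mu : {finite_measure set R -> \bar R}.
Local Notation Re := complex.Re.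
Local Notation Im := complex.Im.
Implicit Types (f g h : R -> R[i]).

Definition Nm f := (\int[mu]_x (cabs2 (f x))%:E)%E.
Definition ipf f g x := Re (f x) * Re (g x) + Im (f x) * Im (g x).
Definition ip f g := \int[mu]_x ipf f g x.

Lemma muT_lty : (mu setT < +oo)%E.
Proof. exact: fin_num_fun_lty (fin_num_measure mu). Qed.

Lemma Nm_ge0 f : (0 <= Nm f)%E.
Proof. by apply: integral_ge0 => x _; rewrite lee_fin cabs2_ge0. Qed.

Lemma meas_ipf f g : meas f -> meas g -> measurable_fun setT (ipf f g).
Proof. by move=> [f1 f2] [g1 g2]; apply: mfD; apply: mfM. Qed.

Lemma ipf_bound f g t x : 0 < t ->
  `|ipf f g x| <= t / 2 * cabs2 (f x) + 1 / (2 * t) * cabs2 (g x).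
Proof.
move=> t0; rewrite /ipf /cabs2.
set a1 := Re (f x); set a2 := Im (f x); set b1 := Re (g x); set b2 := Im (g x).
have h1 := amgm a1 b1 t0; have h2 := amgm a2 b2 t0.
have h3 := ler_normD (a1 * b1) (a2 * b2).
have -> : 1 / (2 * t) * (b1 ^+ 2 + b2 ^+ 2) = (b1 ^+ 2 / t + b2 ^+ 2 / t) / 2.
  by field; rewrite gt_eqF.
lra.
Qed.

Lemma absRint (phi : R -> R) : measurable_fun setT phi ->
  ((`|\int[mu]_x phi x|)%:E <= \int[mu]_x (`|phi x|)%:E)%E.
Proof.
move=> mphi; rewrite /Rintegral.
have [hf|hf] := boolP ((\int[mu]_x (phi x)%:E)%E \is a fin_num).
  rewrite -(abse_EFin (fine _)) fineK //; apply: le_trans (le_abse_integral _ _ _) _ => //.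
    by apply/measurable_EFinP.
have -> : fine (\int[mu]_x (phi x)%:E)%E = 0.
  by move: hf; case: (\int[mu]_x (phi x)%:E)%E.
by rewrite normr0; apply: integral_ge0 => x _; rewrite lee_fin.
Qed.

Lemma int_bound f g t : meas f -> meas g -> 0 < t ->
  (\int[mu]_x (`|ipf f g x|)%:E <= (t / 2)%:E * Nm f + (1 / (2 * t))%:E * Nm g)%E.
Proof.
move=> mf mg t0.
have c1 : 0 <= t / 2 by rewrite divr_ge0 // ltW.
have c2 : 0 <= 1 / (2 * t) by rewrite divr_ge0 // mulr_ge0 // ltW.
apply: (@le_trans _ _ (\int[mu]_x ((t / 2) * cabs2 (f x) + 1 / (2 * t) * cabs2 (g x))%:E)%E).
  apply: ge0_le_integral.
- by [].
- by move=> x _; rewrite lee_fin.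
- apply/measurable_EFinP.
  exact: (measurableT_comp (@normr_measurable R setT) (meas_ipf mf mg)).
- apply/measurable_EFinP; apply: mfD; apply: mfM => //; exact: meas_cabs2.
- by move=> x _; rewrite lee_fin ipf_bound.
rewrite le_eqVlt; apply/orP; left; apply/eqP.
rewrite (_ : (fun x => (t / 2 * cabs2 (f x) + 1 / (2 * t) * cabs2 (g x))%:E) =
  (fun x => (t / 2)%:E * (cabs2 (f x))%:E + (1 / (2 * t))%:E * (cabs2 (g x))%:E)%E); last first.
  by apply/funext => x; rewrite EFinD.
have mF : measurable_fun setT (fun x => (cabs2 (f x))%:E) by exact: meas_cabs2E.
have mG : measurable_fun setT (fun x => (cabs2 (g x))%:E) by exact: meas_cabs2E.
rewrite ge0_integralD //.
- rewrite (ge0_integralZl _ _ mF) ?(ge0_integralZl _ _ mG) ?lee_fin //.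
  by move=> x _; rewrite lee_fin cabs2_ge0.
  by move=> x _; rewrite lee_fin cabs2_ge0.
- by move=> x _; rewrite mule_ge0 // lee_fin cabs2_ge0.
- apply: emeasurable_funM => //; apply/measurable_EFinP; exact: meas_cabs2.
- by move=> x _; rewrite mule_ge0 // lee_fin cabs2_ge0.
- apply: emeasurable_funM => //; apply/measurable_EFinP; exact: meas_cabs2.
Qed.

Lemma ip_bound f g t : meas f -> meas g -> 0 < t ->
  ((`|ip f g|)%:E <= (t / 2)%:E * Nm f + (1 / (2 * t))%:E * Nm g)%E.
Proof.
move=> mf mg t0; apply: le_trans (int_bound mf mg t0).
by apply: absRint; exact: meas_ipf.
Qed.

Lemma L2_meas f : in_L2 mu f -> meas f.
Proof. by case. Qed.

Lemma Nm_fin f : in_L2 mu f -> Nm f \is a fin_num.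
Proof. by case=> _ _ h; rewrite ge0_fin_numE // Nm_ge0. Qed.

Lemma ip_integrable f g : in_L2 mu f -> in_L2 mu g ->
  mu.-integrable setT (EFin \o ipf f g).
Proof.
move=> hf hg; apply/integrableP; split.
  by apply/measurable_EFinP; apply: meas_ipf; exact: L2_meas.
rewrite (_ : (fun x => `|(EFin \o ipf f g) x|)%E = (fun x => (`|ipf f g x|)%:E)); last first.
  by apply/funext => x.
apply: le_lt_trans (int_bound (L2_meas hf) (L2_meas hg) ltr01) _.
rewrite -ge0_fin_numE; last by rewrite adde_ge0 // mule_ge0 // ?Nm_ge0 // lee_fin.
by rewrite fin_numD !fin_numM // Nm_fin.
Qed.

Lemma le_int (F G : R -> R) : measurable_fun setT F -> measurable_fun setT G ->
  (forall x, 0 <= F x) -> (forall x, F x <= G x) ->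
  (\int[mu]_x (F x)%:E <= \int[mu]_x (G x)%:E)%E.
Proof.
move=> mF mG F0 FG; apply: ge0_le_integral.
- by [].
- by move=> x _; rewrite lee_fin.
- by apply/measurable_EFinP.
- by apply/measurable_EFinP.
- by move=> x _; rewrite lee_fin.
Qed.

Lemma intDZ (a b : R) (F G : R -> R) : 0 <= a -> 0 <= b ->
  measurable_fun setT F -> measurable_fun setT G ->
  (forall x, 0 <= F x) -> (forall x, 0 <= G x) ->
  (\int[mu]_x (a * F x + b * G x)%:E =
   a%:E * \int[mu]_x (F x)%:E + b%:E * \int[mu]_x (G x)%:E)%E.
Proof.
move=> a0 b0 mF mG F0 G0.
have mF' : measurable_fun setT (fun x => (F x)%:E) by apply/measurable_EFinP.
have mG' : measurable_fun setT (fun x => (G x)%:E) by apply/measurable_EFinP.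
rewrite (_ : (fun x => (a * F x + b * G x)%:E) =
  (fun x => a%:E * (F x)%:E + b%:E * (G x)%:E)%E); last first.
  by apply/funext => x; rewrite EFinD.
rewrite ge0_integralD //.
- rewrite (ge0_integralZl _ _ mF') ?(ge0_integralZl _ _ mG') ?lee_fin //.
  by move=> x _; rewrite lee_fin.
  by move=> x _; rewrite lee_fin.
- by move=> x _; rewrite mule_ge0 // lee_fin.
- by apply: emeasurable_funM => //.
- by move=> x _; rewrite mule_ge0 // lee_fin.
- by apply: emeasurable_funM => //.
Qed.

Lemma comb_lty (a b : R) (X Y : \bar R) : 0 <= a -> 0 <= b ->
  (0 <= X)%E -> (0 <= Y)%E -> (X < +oo)%E -> (Y < +oo)%E ->
  (a%:E * X + b%:E * Y < +oo)%E.
Proof.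
move=> a0 b0 X0 Y0 X1 Y1.
rewrite -ge0_fin_numE; last by rewrite adde_ge0 // mule_ge0 // lee_fin.
by rewrite fin_numD !fin_numM // ge0_fin_numE.
Qed.

Lemma Nm_add_le f g : meas f -> meas g ->
  (Nm (fun x => (f x + g x)%R) <= 2%:E * Nm f + 2%:E * Nm g)%E.
Proof.
move=> mf mg; rewrite /Nm -intDZ //; last 4 first.
- exact: meas_cabs2.
- exact: meas_cabs2.
- by move=> x; exact: cabs2_ge0.
- by move=> x; exact: cabs2_ge0.
apply: le_int.
- exact: meas_cabs2 (measD mf mg).
- by apply: mfD; apply: mfM => //; exact: meas_cabs2.
- by move=> x; exact: cabs2_ge0.
- by move=> x; exact: cabs2D_le.
Qed.

Lemma Nm_sub_le f g : meas f -> meas g ->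
  (Nm (fun x => (f x - g x)%R) <= 2%:E * Nm f + 2%:E * Nm g)%E.
Proof.
move=> mf mg; rewrite /Nm -intDZ //; last 4 first.
- exact: meas_cabs2.
- exact: meas_cabs2.
- by move=> x; exact: cabs2_ge0.
- by move=> x; exact: cabs2_ge0.
apply: le_int.
- exact: meas_cabs2 (measB mf mg).
- by apply: mfD; apply: mfM => //; exact: meas_cabs2.
- by move=> x; exact: cabs2_ge0.
- by move=> x; exact: cabs2B_le.
Qed.

Lemma Nm_scale (s : R[i]) f : meas f ->
  Nm (fun x => (s * f x)%R) = ((cabs2 s)%:E * Nm f)%E.
Proof.
move=> mf; rewrite /Nm -ge0_integralZl //.
- by apply: eq_integral => x _; rewrite cabs2M.
- exact: meas_cabs2E.
- by move=> x _; rewrite lee_fin cabs2_ge0.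
- by rewrite lee_fin cabs2_ge0.
Qed.

Lemma L2_add f g : in_L2 mu f -> in_L2 mu g -> in_L2 mu (fun x => f x + g x).
Proof.
move=> hf hg; have [m1 m2] := measD (L2_meas hf) (L2_meas hg).
split => //; apply: le_lt_trans (Nm_add_le (L2_meas hf) (L2_meas hg)) _.
by case: hf => _ _ ?; case: hg => _ _ ?; apply: comb_lty => //; exact: Nm_ge0.
Qed.

Lemma L2_sub f g : in_L2 mu f -> in_L2 mu g -> in_L2 mu (fun x => f x - g x).
Proof.
move=> hf hg; have [m1 m2] := measB (L2_meas hf) (L2_meas hg).
split => //; apply: le_lt_trans (Nm_sub_le (L2_meas hf) (L2_meas hg)) _.
by case: hf => _ _ ?; case: hg => _ _ ?; apply: comb_lty => //; exact: Nm_ge0.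
Qed.

Lemma L2_scale (s : R[i]) f : in_L2 mu f -> in_L2 mu (fun x => s * f x).
Proof.
move=> hf; have [m1 m2] := measZ s (L2_meas hf).
split => //; have := Nm_scale s (L2_meas hf); rewrite /Nm => ->.
case: hf => _ _ h; rewrite -ge0_fin_numE ?mule_ge0 ?Nm_ge0 ?lee_fin ?cabs2_ge0 //.
by rewrite fin_numM // ge0_fin_numE // Nm_ge0.
Qed.

Lemma L2_0 : in_L2 mu (fun _ => 0).
Proof.
have [m1 m2] := @meas0 R; split => //.
rewrite (_ : (fun x => (cabs2 (0 : R[i]))%:E) = cst 0%E); last first.
  by apply/funext => x; rewrite /cabs2 /= expr0n /= addr0.
by rewrite integral0 ltry.
Qed.

Lemma L2_ek k : in_L2 mu (ek k).
Proof.
have [m1 m2] := @meas_ek R k; split => //.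
rewrite (_ : (fun x => (cabs2 (ek k x))%:E) = cst 1%E); last first.
  by apply/funext => x; rewrite /cabs2 /ek /= cos2Dsin2.
rewrite integral_cst // mul1e; exact: muT_lty.
Qed.

Lemma L2_sum (I : Type) (r : seq I) (F : I -> R -> R[i]) :
  (forall j, in_L2 mu (F j)) -> in_L2 mu (fun x => \sum_(j <- r) F j x).
Proof.
move=> hF; elim: r => [|a r IH].
  by rewrite (_ : (fun x => _) = fun _ => 0); [exact: L2_0|apply/funext => x; rewrite big_nil].
rewrite (_ : (fun x => _) = fun x => F a x + \sum_(j <- r) F j x); last first.
  by apply/funext => x; rewrite big_cons.
exact: L2_add.
Qed.

Lemma ipC f g : ip f g = ip g f.
Proof. by apply: eq_Rintegral => x _; rewrite /ipf mulrC (mulrC (Im (f x))). Qed.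

Lemma ipD1 f1 f2 g : in_L2 mu f1 -> in_L2 mu f2 -> in_L2 mu g ->
  ip (fun x => f1 x + f2 x) g = ip f1 g + ip f2 g.
Proof.
move=> h1 h2 hg; rewrite /ip -RintegralD //; last 2 first.
- exact: ip_integrable.
- exact: ip_integrable.
by apply: eq_Rintegral => x _; rewrite /ipf ReD ImD; ring.
Qed.

Lemma ipB1 f1 f2 g : in_L2 mu f1 -> in_L2 mu f2 -> in_L2 mu g ->
  ip (fun x => f1 x - f2 x) g = ip f1 g - ip f2 g.
Proof.
move=> h1 h2 hg; rewrite /ip -RintegralB //; last 2 first.
- exact: ip_integrable.
- exact: ip_integrable.
by apply: eq_Rintegral => x _; rewrite /ipf ReB ImB; ring.
Qed.

Lemma ipB2 f g1 g2 : in_L2 mu f -> in_L2 mu g1 -> in_L2 mu g2 ->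
  ip f (fun x => g1 x - g2 x) = ip f g1 - ip f g2.
Proof. by move=> *; rewrite ipC ipB1 // ipC (ipC g2). Qed.

Lemma ip0 g : ip (fun _ => 0) g = 0.
Proof.
rewrite /ip (_ : (fun x => ipf (fun=> 0) g x) = fun _ => 0); last first.
  by apply/funext => x; rewrite /ipf /= !mul0r addr0.
by rewrite Rintegral_cst // mul0r.
Qed.

Lemma ip_sum1 (I : Type) (r : seq I) (F : I -> R -> R[i]) g :
  (forall j, in_L2 mu (F j)) -> in_L2 mu g ->
  ip (fun x => \sum_(j <- r) F j x) g = \sum_(j <- r) ip (F j) g.
Proof.
move=> hF hg; elim: r => [|a r IH].
  by rewrite big_nil (_ : (fun x => _) = fun _ => 0) ?ip0 //; apply/funext => x; rewrite big_nil.
rewrite big_cons -IH -ipD1 //; last exact: L2_sum.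
by congr ip; apply/funext => x; rewrite big_cons.
Qed.

Lemma ip_sum2 (I : Type) (r : seq I) (F : I -> R -> R[i]) g :
  (forall j, in_L2 mu (F j)) -> in_L2 mu g ->
  ip g (fun x => \sum_(j <- r) F j x) = \sum_(j <- r) ip g (F j).
Proof.
move=> hF hg; rewrite ipC ip_sum1 //; apply: eq_bigr => j _; exact: ipC.
Qed.

Lemma ipself h : ip h h = fine (Nm h).
Proof.
by rewrite /ip /Rintegral /Nm; congr fine.
Qed.

Lemma int_trig (c : R) : mu.-integrable setT (EFin \o (fun x => cos (c * x))) /\
                         mu.-integrable setT (EFin \o (fun x => sin (c * x))).
Proof.
split; apply: (@le_integrable _ _ _ mu setT measurableT _ (EFin \o cst 1)).
- by apply/measurable_EFinP; exact: meas_cos.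
- by move=> x _; rewrite /= lee_fin normr1 cos_max.
- exact: finite_measure_integrable_cst.
- by apply/measurable_EFinP; exact: meas_sin.
- by move=> x _; rewrite /= lee_fin normr1 sin_max.
- exact: finite_measure_integrable_cst.
Qed.

Lemma ip_ek (a b : R[i]) (j k : int) :
  ip (fun x => a * ek j x) (fun x => b * ek k x) =
  Re (a * conjc b * cintegral mu (ek (j - k))).
Proof.
set p := a * conjc b.
rewrite /ip (_ : (fun x => ipf (fun x => a * ek j x) (fun x => b * ek k x) x) =
   (fun x => Re p * cos (2 * pi * (j - k)%:~R * x) -
             Im p * sin (2 * pi * (j - k)%:~R * x))); last first.
  apply/funext => x; rewrite /ipf /p /ek !ReM !ImM /=.
  rewrite (_ : 2 * pi * (j - k)%:~R * x = 2 * pi * j%:~R * x - 2 * pi * k%:~R * x); last first.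
    by rewrite intrB; ring.
  rewrite cosB sinB; clear p; case: a => a1 a2; case: b => b1 b2 /=; ring.
have [ic isn] := int_trig (2 * pi * (j - k)%:~R).
rewrite RintegralB //; last 2 first.
- exact: (integrableZl measurableT (Re p) ic).
- exact: (integrableZl measurableT (Im p) isn).
rewrite (RintegralZl (Re p) measurableT ic) (RintegralZl (Im p) measurableT isn) ReM /cintegral /ek /=.
by [].
Qed.
End Int.
Section FopS.
Variable R : realType.
Implicit Types (c d u v : int -> R[i]).

Lemma Fop_seq c (r : seq int) x : uniq r -> (forall k, c k != 0 -> k \in r) ->
  Fop c x = \sum_(k <- r) c k * ek k x.
Proof.
move=> ur hr; rewrite /Fop fsbig_supp (fsbig_fwiden r) //.
- move=> k [_ /= nz]; apply: hr; apply/eqP => ck0; apply: nz.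
  by rewrite ck0 mul0r.
- move=> k [_ hk] /=.
  have [//|nz] := eqVneq (c k * ek k x) 0.
  by exfalso; apply: hk; split => //; exact/eqP.
Qed.

Lemma cover2 c d : finsupp c -> finsupp d ->
  exists r : seq int, [/\ uniq r, (forall k, c k != 0 -> k \in r) &
                               (forall k, d k != 0 -> k \in r)].
Proof.
move=> fc fd; have fU : finite_set ([set k | c k != 0] `|` [set k | d k != 0]).
  by rewrite finite_setU.
exists (finmap.enum_fset (fset_set ([set k | c k != 0] `|` [set k | d k != 0]))); split.
- exact: finmap.fset_uniq.
- by move=> k ck; rewrite in_fset_set // inE; left.
- by move=> k dk; rewrite in_fset_set // inE; right.
Qed.

Lemma finsupp0 : finsupp (fun _ : int => 0 : R[i]).
Proof.
rewrite /finsupp (_ : [set k | _] = set0) //.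
by apply/seteqP; split => k //=; rewrite eqxx.
Qed.

Lemma finsupp_lin (a : R[i]) c d : finsupp c -> finsupp d ->
  finsupp (fun k => a * c k + d k).
Proof.
move=> fc fd.
have fU : finite_set ([set k | c k != 0] `|` [set k | d k != 0]) by rewrite finite_setU.
apply: (sub_finite_set _ fU).
move=> k /= h; have [ck|ck] := eqVneq (c k) 0.
  by right; move: h; rewrite ck mulr0 add0r.
by left.
Qed.

Lemma finsupp_sub u v : finsupp u -> finsupp v -> finsupp (fun k => u k - v k).
Proof.
move=> fu fv; have := finsupp_lin (-1) fv fu.
by congr finsupp; apply/funext => k; rewrite mulN1r addrC.
Qed.

Lemma Fop0 x : Fop (fun _ : int => 0 : R[i]) x = 0.
Proof. by rewrite (@Fop_seq _ [::]) ?big_nil // => k; rewrite eqxx. Qed.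

Lemma Fop_lin (a : R[i]) c d x : finsupp c -> finsupp d ->
  Fop (fun k => a * c k + d k) x = a * Fop c x + Fop d x.
Proof.
move=> fc fd; have [r [ur hc hd]] := cover2 fc fd.
rewrite !(@Fop_seq _ r) //; last first.
  move=> k h; have [ck|ck] := eqVneq (c k) 0; last exact: hc.
  by apply: hd; move: h; rewrite ck mulr0 add0r.
rewrite mulr_sumr -big_split /=; apply: eq_bigr => k _; ring.
Qed.

Lemma Fop_sub u v x : finsupp u -> finsupp v ->
  Fop (fun k => u k - v k) x = Fop u x - Fop v x.
Proof.
move=> fu fv; have := Fop_lin (-1) x fv fu.
rewrite mulN1r addrC => <-; congr Fop; apply/funext => k; ring.
Qed.

End FopS.

Section FopInt.
Variable R : realType.
Variable mu : {finite_measure set R -> \bar R}.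

Lemma Fop_L2 (c : int -> R[i]) : finsupp c -> in_L2 mu (Fop c).
Proof.
move=> fc; have [r [ur hc _]] := cover2 fc fc.
rewrite (_ : Fop c = fun x => \sum_(k <- r) c k * ek k x); last first.
  by apply/funext => x; exact: Fop_seq.
apply: L2_sum => k; apply: L2_scale; exact: L2_ek.
Qed.

End FopInt.
Section Uniq.
Variable R : realType.
Variable mu : {finite_measure set R -> \bar R}.
Local Notation Re := complex.Re.
Local Notation Im := complex.Im.

Lemma Re_bound (a b : R[i]) t : 0 < t ->
  `|Re (a * b)| <= t / 2 * cabs2 a + 1 / (2 * t) * cabs2 b.
Proof.
move=> t0; rewrite ReM /cabs2.
have h1 := amgm (Re a) (Re b) t0; have h2 := amgm (Im a) (Im b) t0.
have h3 := ler_normB (Re a * Re b) (Im a * Im b).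
have -> : 1 / (2 * t) * (Re b ^+ 2 + Im b ^+ 2) = (Re b ^+ 2 / t + Im b ^+ 2 / t) / 2.
  by field; rewrite gt_eqF.
lra.
Qed.

Lemma cabs2_conj (s : R[i]) : cabs2 (conjc s) = cabs2 s.
Proof. by case: s => a b; rewrite /cabs2 /= sqrrN. Qed.

Lemma ebound (x a b x1 y1 : R) (X Y : \bar R) : 0 <= a -> 0 <= b ->
  (x%:E <= a%:E * X + b%:E * Y)%E -> (X <= x1%:E)%E -> (Y <= y1%:E)%E ->
  x <= a * x1 + b * y1.
Proof.
move=> a0 b0 h hX hY; rewrite -lee_fin; apply: (le_trans h).
by rewrite EFinD !EFinM leeD // lee_wpmul2l // lee_fin.
Qed.

Lemma Nm_ek k : Nm mu (ek k) = mu setT.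
Proof.
rewrite /Nm (_ : (fun x => (cabs2 (ek k x))%:E) = cst 1%E); last first.
  by apply/funext => x; rewrite /cabs2 /ek /= cos2Dsin2.
by rewrite integral_cst // mul1e.
Qed.

Lemma muT_fin : mu setT = (fine (mu setT))%:E.
Proof. by rewrite fineK // ge0_fin_numE // muT_lty. Qed.

Lemma L2dist2_ge0 (f g : R -> R[i]) : (0 <= L2dist2 mu f g)%E.
Proof. by apply: integral_ge0 => x _; rewrite lee_fin cabs2_ge0. Qed.

Variable M : R.
Hypothesis hM : (\esum_(k in [set: int]) (cabs2 (cintegral mu (ek k)))%:E = M%:E)%E.

Lemma hat_bound (k : int) (r : seq int) : uniq r ->
  \sum_(j <- r) cabs2 (cintegral mu (ek (j - k))) <= M.
Proof.
move=> ur; rewrite -lee_fin -hM.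
rewrite (_ : \sum_(j <- r) _ = \sum_(i <- map (fun j => j - k) r) cabs2 (cintegral mu (ek i))).
  apply: sum_le_esum; last by move=> i; exact: cabs2_ge0.
  by rewrite map_inj_uniq // => i j /addIr.
by rewrite big_map.
Qed.

Lemma uniq_closure c g1 g2 :
  graph_closure mu (c, g1) -> graph_closure mu (c, g2) ->
  {ae mu, forall x, g1 x = g2 x}.
Proof.
case=> /= _ hg1 [u [fu cu Fu]]; case=> /= _ hg2 [v [fv cv Fv]].
pose h := fun x => g1 x - g2 x.
have hh : in_L2 mu h by exact: L2_sub.
pose w n := fun k => u n k - v n k.
have fw n : finsupp (w n) by exact: finsupp_sub.
have Fw n x : Fop (w n) x = Fop (u n) x - Fop (v n) x by exact: Fop_sub.
have L2u n : in_L2 mu (Fop (u n)) by exact: Fop_L2.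
have L2v n : in_L2 mu (Fop (v n)) by exact: Fop_L2.
have L2w n : in_L2 mu (Fop (w n)) by exact: Fop_L2.
have L2hw n : in_L2 mu (fun x => h x - Fop (w n) x) by exact: L2_sub.
have Lse (s : R[i]) k : in_L2 mu (fun x => s * ek k x) by apply: L2_scale; exact: L2_ek.
have EA : forall e : R, 0 < e -> \forall n \near \oo,
    (Nm mu (fun x => (h x - Fop (w n) x)%R) <= e%:E)%E.
  move=> e e0.
  have Hu := (cvg0P (fun n => L2dist2_ge0 _ _)).1 Fu (e / 4) (divr_gt0 e0 (ltr0n _ 4)).
  have Hv := (cvg0P (fun n => L2dist2_ge0 _ _)).1 Fv (e / 4) (divr_gt0 e0 (ltr0n _ 4)).
  near=> n.
  have hu : (L2dist2 mu (Fop (u n)) g1 <= (e / 4)%:E)%E by near: n; exact: Hu.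
  have hv : (L2dist2 mu (Fop (v n)) g2 <= (e / 4)%:E)%E by near: n; exact: Hv.
  rewrite (_ : (fun x => h x - Fop (w n) x) =
    (fun x => (Fop (v n) x - g2 x) - (Fop (u n) x - g1 x))); last first.
    by apply/funext => x; rewrite Fw /h; ring.
  apply: le_trans (Nm_sub_le _ (L2_meas (L2_sub (L2v n) hg2)) (L2_meas (L2_sub (L2u n) hg1))) _.
  apply: le_trans (leeD (lee_wpmul2l _ hv) (lee_wpmul2l _ hu)) _.
  - by rewrite lee_fin.
  - by rewrite lee_fin.
  by rewrite -!EFinM -EFinD lee_fin; lra.
have EB : forall e : R, 0 < e -> \forall n \near \oo,
    forall r : seq int, uniq r -> \sum_(j <- r) cabs2 (w n j) <= e.
  move=> e e0.
  have l2ge0 n (d : int -> R[i]) : (0 <= l2dist2 (u n) d)%E.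
    by apply: esum_ge0 => k _; rewrite lee_fin cabs2_ge0.
  have l2ge0' n (d : int -> R[i]) : (0 <= l2dist2 (v n) d)%E.
    by apply: esum_ge0 => k _; rewrite lee_fin cabs2_ge0.
  have Hu := (cvg0P (fun n => l2ge0 n c)).1 cu (e / 4) (divr_gt0 e0 (ltr0n _ 4)).
  have Hv := (cvg0P (fun n => l2ge0' n c)).1 cv (e / 4) (divr_gt0 e0 (ltr0n _ 4)).
  near=> n => r ur.
  have hu : (l2dist2 (u n) c <= (e / 4)%:E)%E by near: n; exact: Hu.
  have hv : (l2dist2 (v n) c <= (e / 4)%:E)%E by near: n; exact: Hv.
  have su := le_trans (sum_le_esum (f := fun j => cabs2 (u n j - c j)) ur (fun j => cabs2_ge0 _)) hu.
  have sv := le_trans (sum_le_esum (f := fun j => cabs2 (v n j - c j)) ur (fun j => cabs2_ge0 _)) hv.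
  rewrite lee_fin in su; rewrite lee_fin in sv.
  apply: (@le_trans _ _ (\sum_(j <- r) (2 * cabs2 (u n j - c j) + 2 * cabs2 (v n j - c j)))).
    apply: ler_sum => j _; rewrite /w.
    rewrite (_ : u n j - v n j = (u n j - c j) - (v n j - c j)); last by ring.
    exact: cabs2B_le.
  rewrite big_split /= -!mulr_sumr; lra.
have C : forall s k, ip mu h (fun x => s * ek k x) = 0.
  move=> s k; apply/eqP; rewrite -normr_le0.
  pose muT := fine (mu setT).
  have muT0 : 0 <= muT by rewrite fine_ge0.
  apply: (@small_le0 _ _ (cabs2 s * (muT + M) / 2)).
    rewrite divr_ge0 // mulr_ge0 ?cabs2_ge0 // addr_ge0 //.
    by rewrite -lee_fin -hM; apply: esum_ge0 => i _; rewrite lee_fin cabs2_ge0.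
  move=> t e t0 e0.
  have [n [An Bn]] := filter_ex (filterI (EA e e0) (EB e e0)).
  have [r [ur hr _]] := cover2 (fw n) (fw n).
  have FwE : Fop (w n) = fun x => \sum_(j <- r) w n j * ek j x.
    by apply/funext => x; exact: Fop_seq.
  have dec : ip mu h (fun x => s * ek k x) =
      ip mu (fun x => h x - Fop (w n) x) (fun x => s * ek k x) +
      ip mu (Fop (w n)) (fun x => s * ek k x).
    by rewrite ipB1 // addrNK.
  have b1 : `|ip mu (fun x => h x - Fop (w n) x) (fun x => s * ek k x)| <=
            t / 2 * e + 1 / (2 * t) * (cabs2 s * muT).
    apply: ebound.
    - by rewrite divr_ge0 // ltW.
    - by rewrite divr_ge0 // mulr_ge0 // ltW.
    - exact: ip_bound (L2_meas (L2hw n)) (L2_meas (Lse s k)) t0.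
    - exact: An.
    - rewrite Nm_scale; last exact: L2_meas (L2_ek _ _).
      by rewrite Nm_ek muT_fin.
  have b2 : `|ip mu (Fop (w n)) (fun x => s * ek k x)| <=
            t / 2 * e + 1 / (2 * t) * (cabs2 s * M).
    rewrite FwE ip_sum1; [|by move=> j; exact: Lse|exact: Lse].
    under eq_bigr do rewrite ip_ek -mulrA.
    apply: le_trans (ler_norm_sum _ _ _) _.
    apply: (@le_trans _ _ (\sum_(j <- r) (t / 2 * cabs2 (w n j) +
        1 / (2 * t) * (cabs2 s * cabs2 (cintegral mu (ek (j - k))))))).
      apply: ler_sum => j _; apply: le_trans (Re_bound _ _ t0) _.
      by rewrite cabs2M cabs2_conj.
    rewrite big_split /= -!mulr_sumr.
    have := Bn r ur; have := hat_bound k ur.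
    have ht : 0 <= t / 2 by rewrite divr_ge0 // ltW.
    have ht' : 0 <= 1 / (2 * t) by rewrite divr_ge0 // mulr_ge0 // ltW.
    have hs := cabs2_ge0 s.
    move=> hb ha.
    apply: lerD; first by rewrite ler_wpM2l.
    rewrite ler_wpM2l //; apply: le_trans _ (ler_wpM2l hs hb).
    by rewrite mulr_sumr.
  rewrite dec; apply: le_trans (ler_normD _ _) _.
  have -> : cabs2 s * (muT + M) / 2 / t = 1 / (2 * t) * (cabs2 s * muT) + 1 / (2 * t) * (cabs2 s * M).
    by field; rewrite gt_eqF.
  have -> : t * e = t / 2 * e + t / 2 * e by field.
  lra.
have D : forall n, ip mu h (Fop (w n)) = 0.
  move=> n; have [r [ur hr _]] := cover2 (fw n) (fw n).
  rewrite (_ : Fop (w n) = fun x => \sum_(j <- r) w n j * ek j x); last first.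
    by apply/funext => x; exact: Fop_seq.
  rewrite ip_sum2; [|by move=> j; exact: Lse|exact: hh].
  by rewrite big1 // => j _; exact: C.
have Nh0 : fine (Nm mu h) = 0.
  apply/eqP; rewrite eq_le fine_ge0 ?Nm_ge0 // andbT.
  apply: (@small_le0 _ _ (fine (Nm mu h) / 2)).
    by rewrite divr_ge0 // fine_ge0 // Nm_ge0.
  move=> t e t0 e0.
  have [n An] := filter_ex (EA e e0).
  rewrite {1}(_ : fine (Nm mu h) = ip mu (fun x => h x - Fop (w n) x) h); last first.
    by rewrite -ipself ipC ipB2 // D subr0.
  apply: le_trans (ler_norm _) _.
  have H : `|ip mu (fun x => h x - Fop (w n) x) h| <=
      t / 2 * e + 1 / (2 * t) * fine (Nm mu h).
    apply: ebound.
    - by rewrite divr_ge0 // ltW.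
    - by rewrite divr_ge0 // mulr_ge0 // ltW.
    - exact: (ip_bound mu (L2_meas (L2hw n)) (L2_meas hh) t0).
    - exact: An.
    - by rewrite fineK // Nm_fin.
  apply: le_trans H _.
  rewrite (_ : fine (Nm mu h) / 2 / t = 1 / (2 * t) * fine (Nm mu h)); last first.
    by field; rewrite gt_eqF.
  have te : 0 <= t * e by rewrite mulr_ge0 // ltW.
  rewrite (_ : t / 2 * e = t * e / 2); last by rewrite mulrAC.
  lra.
have Nh : Nm mu h = 0%E by rewrite -(fineK (Nm_fin hh)) Nh0.
have mh : measurable_fun setT (fun x => (cabs2 (h x))%:E) by exact: meas_cabs2E (L2_meas hh).
have H : (\int[mu]_x `|(cabs2 (h x))%:E| = 0)%E.
  rewrite -Nh /Nm; apply: eq_integral => x _.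
  by rewrite gee0_abs // lee_fin cabs2_ge0.
have := (ae_eq_integral_abs mu measurableT mh).1 H.
apply: filterS => x /(_ I) /= /eqP; rewrite eqe => /eqP /cabs2_eq0 /eqP.
by rewrite /h subr_eq0 => /eqP.
Unshelve. all: end_near.
Qed.

End Uniq.
Section Closure.
Variable R : realType.
Variable mu : {finite_measure set R -> \bar R}.

Lemma cvg_comb (x X Y : nat -> \bar R) (al be : R) : 0 <= al -> 0 <= be ->
  (forall n, (0 <= x n)%E) -> (forall n, (0 <= X n)%E) -> (forall n, (0 <= Y n)%E) ->
  (forall n, (x n <= al%:E * X n + be%:E * Y n)%E) ->
  (X n @[n --> \oo] --> 0%E) -> (Y n @[n --> \oo] --> 0%E) ->
  (x n @[n --> \oo] --> 0%E).
Proof.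
move=> al0 be0 x0 X0 Y0 hx cX cY; apply/(cvg0P x0) => e e0.
have e'0 : 0 < e / (al + be + 1) by rewrite divr_gt0 //; lra.
have HX := (cvg0P X0).1 cX _ e'0; have HY := (cvg0P Y0).1 cY _ e'0.
near=> n.
have hX : (X n <= (e / (al + be + 1))%:E)%E by near: n; exact: HX.
have hY : (Y n <= (e / (al + be + 1))%:E)%E by near: n; exact: HY.
apply: le_trans (hx n) _.
apply: le_trans (leeD (lee_wpmul2l _ hX) (lee_wpmul2l _ hY)) _.
- by rewrite lee_fin.
- by rewrite lee_fin.
rewrite -!EFinM -EFinD lee_fin -mulrDl.
rewrite mulrCA; apply: ler_piMr; first exact: ltW.
rewrite ler_pdivrMr; last lra.
lra.
Unshelve. all: end_near.
Qed.

Lemma l2_lin_le (a : R[i]) (c c' d d' : int -> R[i]) :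
  (\esum_(k in [set: int]) (cabs2 ((a * c k + d k) - (a * c' k + d' k)))%:E <=
   (2 * cabs2 a)%:E * l2dist2 c c' + 2%:E * l2dist2 d d')%E.
Proof.
apply: le_trans (le_esum (b := fun k => ((2 * cabs2 a)%:E * (cabs2 (c k - c' k))%:E +
                                         2%:E * (cabs2 (d k - d' k))%:E)%E) _) _.
  move=> k _; rewrite -!EFinM -EFinD lee_fin.
  rewrite (_ : (a * c k + d k) - (a * c' k + d' k) = a * (c k - c' k) + (d k - d' k)); last by ring.
  by apply: le_trans (cabs2D_le _ _) _; rewrite cabs2M mulrA.
rewrite esumD; last 2 first.
- by move=> k _; rewrite -EFinM lee_fin mulr_ge0 // ?mulr_ge0 // cabs2_ge0.
- by move=> k _; rewrite -EFinM lee_fin mulr_ge0 // cabs2_ge0.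
apply: leeD; apply: esumZ_le.
- by rewrite mulr_ge0 // cabs2_ge0.
- by move=> k; rewrite lee_fin cabs2_ge0.
- by [].
- by move=> k; rewrite lee_fin cabs2_ge0.
Qed.

Lemma l2dist2_ge0 (c d : int -> R[i]) : (0 <= l2dist2 c d)%E.
Proof. by apply: esum_ge0 => k _; rewrite lee_fin cabs2_ge0. Qed.

Lemma in_l2E (c : int -> R[i]) : in_l2 c <-> (l2dist2 c (fun _ => 0%R) < +oo)%E.
Proof.
rewrite /in_l2 /l2dist2 (_ : (fun k => (cabs2 (c k - 0))%:E) = (fun k => (cabs2 (c k))%:E)) //.
by apply/funext => k; rewrite subr0.
Qed.

Lemma lin_closure (a : R[i]) c d g g' :
  graph_closure mu (c, g) -> graph_closure mu (d, g') ->
  graph_closure mu (fun k => a * c k + d k, fun x => a * g x + g' x).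
Proof.
case=> /= hc hg [u [fu cu Fu]]; case=> /= hd hg' [v [fv cv Fv]].
split => /=.
- apply/in_l2E.
  rewrite (_ : l2dist2 _ _ = \esum_(k in [set: int])
      (cabs2 ((a * c k + d k) - (a * (fun _ => 0) k + (fun _ => 0) k)))%:E); last first.
    by apply: eq_esum => k _; rewrite mulr0 addr0.
  apply: le_lt_trans (l2_lin_le a c (fun _ => 0) d (fun _ => 0)) _.
  apply: comb_lty => //; try exact: l2dist2_ge0.
  + by rewrite mulr_ge0 // cabs2_ge0.
  + by move: hc => /in_l2E.
  + by move: hd => /in_l2E.
- by apply: L2_add => //; exact: L2_scale.
exists (fun n k => a * u n k + v n k); split.
- by move=> n; exact: finsupp_lin.
- apply: (@cvg_comb _ (fun n => l2dist2 (u n) c) (fun n => l2dist2 (v n) d) (2 * cabs2 a) 2) => //.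
  + by rewrite mulr_ge0 // cabs2_ge0.
  + by move=> n; exact: l2dist2_ge0.
  + by move=> n; exact: l2dist2_ge0.
  + by move=> n; exact: l2dist2_ge0.
  + by move=> n; exact: l2_lin_le.
- apply: (@cvg_comb _ (fun n => L2dist2 mu (Fop (u n)) g) (fun n => L2dist2 mu (Fop (v n)) g')
     (2 * cabs2 a) 2) => //.
  + by rewrite mulr_ge0 // cabs2_ge0.
  + by move=> n; exact: L2dist2_ge0.
  + by move=> n; exact: L2dist2_ge0.
  + by move=> n; exact: L2dist2_ge0.
  move=> n.
  have mu1 := L2_meas (L2_sub (Fop_L2 mu (fu n)) hg).
  have mv1 := L2_meas (L2_sub (Fop_L2 mu (fv n)) hg').
  rewrite /L2dist2.
  rewrite (_ : (fun x => (cabs2 (Fop (fun k => a * u n k + v n k) x - (a * g x + g' x)))%:E) =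
     (fun x => (cabs2 (a * (Fop (u n) x - g x) + (Fop (v n) x - g' x)))%:E)); last first.
    by apply/funext => x; rewrite Fop_lin //; congr (cabs2 _)%:E; ring.
  apply: le_trans (Nm_add_le mu (measZ a mu1) mv1) _.
  rewrite Nm_scale // EFinM muleA.
  by [].
Qed.

Lemma ae_closure c f g : graph_closure mu (c, f) -> in_L2 mu g ->
  {ae mu, forall x, g x = f x} -> graph_closure mu (c, g).
Proof.
case=> /= hc hf [u [fu cu Fu]] hg gf; split => //; exists u; split => //.
rewrite (_ : (fun n => L2dist2 mu (Fop (u n)) g) = (fun n => L2dist2 mu (Fop (u n)) f)) //.
apply/funext => n; rewrite /L2dist2; apply: ae_eq_integral => //.
- exact: meas_cabs2E (L2_meas (L2_sub (Fop_L2 mu (fu n)) hg)).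
- exact: meas_cabs2E (L2_meas (L2_sub (Fop_L2 mu (fu n)) hf)).
- by apply: filterS gf => x gfx _; rewrite gfx.
Qed.

End Closure.

Unset Implicit Arguments.
Set Strict Implicit.

Theorem lemma3p5 (R : realType) (mu : {finite_measure set R -> \bar R}) :
  mu (~` `[0%R, 1%R]) = 0%E ->
  (\esum_(k in [set: int]) (cabs2 (cintegral mu (ek k)))%:E < +oo)%E ->
  closable mu.
Proof.
move=> _ hfin.
set E := (\esum_(k in [set: int]) (cabs2 (cintegral mu (ek k)))%:E)%E in hfin.
have hM : E = (fine E)%:E.
  by rewrite fineK // ge0_fin_numE // esum_ge0 // => k _; rewrite lee_fin cabs2_ge0.
pose S := graph_closure mu.
pose Dom := fun c => exists g, S (c, g).
pose T := fun c => match pselect (exists g, S (c, g)) with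
                   | left H => projT1 (cid H) | right _ => fun _ : R => 0 : R[i] end.
have TS c : Dom c -> S (c, T c).
  by rewrite /T; case: pselect => // H _; exact: projT2 (cid H).
have uq := uniq_closure hM.
exists Dom, T; split.
- exists (fun _ => 0); split => /=.
  + rewrite /in_l2 esum1 ?ltry // => k _; by rewrite /cabs2 /= expr0n /= addr0.
  + exact: L2_0.
  + exists (fun _ _ => 0); split.
    * by move=> n; exact: finsupp0.
    * rewrite (_ : (fun n => _) = fun _ => 0%E); first exact: cvg_cst.
      apply/funext => n; rewrite /l2dist2 esum1 // => k _.
      by rewrite subr0 /cabs2 /= expr0n /= addr0.
    * rewrite (_ : (fun n => _) = fun _ => 0%E); first exact: cvg_cst.
      apply/funext => n; rewrite /L2dist2 (_ : (fun x => _) = cst 0%E) ?integral0 //.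
      by apply/funext => x; rewrite Fop0 subr0 /cabs2 /= expr0n /= addr0.
- move=> a c d [g Sg] [g' Sg']; exists (fun x => a * g x + g' x); exact: lin_closure.
- by move=> c /TS [].
- move=> a c d Dc Dd; apply: uq.
  + apply: TS; case: Dc => g Sg; case: Dd => g' Sg'.
    by exists (fun x => a * g x + g' x); exact: lin_closure.
  + exact: lin_closure (TS _ Dc) (TS _ Dd).
- move=> c g hg; split.
  + move=> Scg; have Dc : Dom c by exists g.
    by split => //; exact: uq Scg (TS _ Dc).
  + by case=> Dc ae; exact: ae_closure (TS _ Dc) hg ae.
Qed.
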